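(* For $s\ge3$, we have $\mathrm{ex}(n,P^{(3)}_s)=f(n,s-2)$.
   Context: An ordered $3$-uniform hypergraph is a $3$-uniform hypergraph with linearly ordered vertex set; $G$ contains $H$ if there is an order-preserving injection $f:V(H)\to V(G)$ with $f(e)\in E(G)$ for all $e\in E(H)$. $\mathrm{ex}(n,H)$ is the maximum number of edges of an $n$-vertex ordered $3$-uniform hypergraph not containing $H$. $P^{(3)}_s$ has vertices $v_1<\dots<v_s$ and edges $\{v_j,v_{j+1},v_{j+2}\}$ for $1\le j\le s-2$. Let $K^{(2)}_n$ be the complete graph on $[n]$ with the natural order. A $k$-edge-labeling $\phi$ of $K^{(2)}_n$ assigns to each pair $uv$ a label from a fixed linearly ordered set of size $k$. A triple $u<v<w$ is good (for $\phi$) if $\phi(uv)<\phi(vw)$, and bad otherwise. $f(n,k)$ is the maximum, over all $k$-edge-labelings of $K^{(2)}_n$, of the number of good triples. *)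

(* Defs.v *)
From mathcomp Require Import all_boot.
Set Implicit Arguments. Unset Strict Implicit. Unset Printing Implicit Defensive.

Definition uniform3 (n : nat) (G : {set {set 'I_n}}) : bool :=
  [forall e in G, #|e| == 3].

(* G contains P^(3)_s: there is an order-preserving injection
   f : 'I_s -> 'I_n (strictly increasing) mapping each consecutive triple
   {v_j, v_{j+1}, v_{j+2}} to an edge of G. *)
Definition contains_tight_path (n s : nat) (G : {set {set 'I_n}}) : bool :=
  [exists f : {ffun 'I_s -> 'I_n},
     [forall i : 'I_s, forall j : 'I_s, (i < j) ==> (f i < f j)] &&
     [forall i : 'I_s, forall j : 'I_s, forall k : 'I_s,
        ((val j == (val i).+1) && (val k == (val i).+2)) ==>
        ([set f i; f j; f k] \in G)]].

Definition ex_path (n s : nat) : nat :=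
  \max_(G : {set {set 'I_n}} | uniform3 G && ~~ contains_tight_path s G) #|G|.

(* A k-edge-labeling of K_n: labels in 'I_k (linearly ordered, size k);
   phi (u, v) is the label of the pair uv for u < v (other values unused). *)
Definition good_triples (n k : nat) (phi : {ffun 'I_n * 'I_n -> 'I_k}) : nat :=
  #|[set t : 'I_n * 'I_n * 'I_n |
      [&& t.1.1 < t.1.2, t.1.2 < t.2 &
          (phi (t.1.1, t.1.2) < phi (t.1.2, t.2))%N]]|.

Definition f_lab (n k : nat) : nat :=
  \max_(phi : {ffun 'I_n * 'I_n -> 'I_k}) good_triples phi.

(* Main.v *)
Require Import Defs.
From mathcomp Require Import all_boot zify.
Set Implicit Arguments. Unset Strict Implicit. Unset Printing Implicit Defensive.

Lemma in3 n (x a b c : 'I_n) : x \in [set a; b; c] ->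
  (x : nat) = a \/ (x : nat) = b \/ (x : nat) = c.
Proof. by rewrite !inE => /orP [/orP [] |] /eqP ->; auto. Qed.

Lemma set3_uniq n (a b c x y z : 'I_n) : a < b -> b < c -> x < y -> y < z ->
  [set a; b; c] = [set x; y; z] -> [/\ a = x, b = y & c = z].
Proof.
move=> ab bc xy yz E.
have ha : a \in [set x; y; z] by rewrite -E !inE eqxx.
have hb : b \in [set x; y; z] by rewrite -E !inE eqxx !orbT.
have hc : c \in [set x; y; z] by rewrite -E !inE eqxx !orbT.
move/in3: ha; move/in3: hb; move/in3: hc => hc hb ha.
by split; apply/val_inj => /=; lia.
Qed.

Lemma card_set3 n (a b c : 'I_n) : a < b -> b < c -> #|[set a; b; c]| = 3.
Proof.
move=> ab bc.
rewrite -setUA cardsU1 cardsU1 cards1 !inE.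
have -> : (a == b) = false by apply/negbTE; apply/eqP => E; move: ab; rewrite E ltnn.
have -> : (a == c) = false by apply/negbTE; apply/eqP => E; move: ab bc; rewrite E; lia.
have -> : (b == c) = false by apply/negbTE; apply/eqP => E; move: bc; rewrite E ltnn.
by [].
Qed.

Lemma set3_sorted n (e : {set 'I_n}) : #|e| = 3 ->
  exists a b c : 'I_n, [/\ a < b, b < c & e = [set a; b; c]].
Proof.
move=> he.
have [x xe] : exists x, x \in e by apply/card_gt0P; rewrite he.
have /cards2P [y [z [yz E2]]] : #|e :\ x| == 2.
  by move: he; rewrite (cardsD1 x) xe /=; lia.
have ye : y \in e :\ x by rewrite E2 !inE eqxx.
have ze : z \in e :\ x by rewrite E2 !inE eqxx orbT.
rewrite !inE in ye ze.
case/andP: ye => xy _; case/andP: ze => xz _.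
have Ee : e = [set x; y; z] by rewrite -(setD1K xe) E2 setUA.
have nxy : (x : nat) <> y by move=> h; move/eqP: xy; apply; apply/val_inj.
have nxz : (x : nat) <> z by move=> h; move/eqP: xz; apply; apply/val_inj.
have nyz : (y : nat) <> z by move=> h; move/eqP: yz; apply; apply/val_inj.
have P : forall a b c : 'I_n, [set x; y; z] = [set a; b; c] ->
   (a < b) -> (b < c) -> exists a b c : 'I_n, [/\ a < b, b < c & e = [set a; b; c]].
  by move=> a b c Eq ab bc; exists a, b, c; rewrite Ee Eq.
have S : forall t : 'I_n, [|| t == x, t == y | t == z] = [|| t == x, t == y | t == z] by [].
case: (ltngtP x y) => h1; case: (ltngtP y z) => h2; case: (ltngtP x z) => h3; try lia.
- apply: (P x y z) => //.
- apply: (P x z y) => //; apply/setP => t; rewrite !inE; by case: (t == x); case: (t == y); case: (t == z).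
- apply: (P z x y) => //; apply/setP => t; rewrite !inE; by case: (t == x); case: (t == y); case: (t == z).
- apply: (P y x z) => //; apply/setP => t; rewrite !inE; by case: (t == x); case: (t == y); case: (t == z).
- apply: (P y z x) => //; apply/setP => t; rewrite !inE; by case: (t == x); case: (t == y); case: (t == z).
- apply: (P z y x) => //; apply/setP => t; rewrite !inE; by case: (t == x); case: (t == y); case: (t == z).
Qed.

Definition goodset n k (phi : {ffun 'I_n * 'I_n -> 'I_k}) : {set 'I_n * 'I_n * 'I_n} :=
  [set t : 'I_n * 'I_n * 'I_n |
      [&& t.1.1 < t.1.2, t.1.2 < t.2 &
          (phi (t.1.1, t.1.2) < phi (t.1.2, t.2))%N]].

Definition h3 n (t : 'I_n * 'I_n * 'I_n) : {set 'I_n} := [set t.1.1; t.1.2; t.2].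

Lemma dir1 s' n (phi : {ffun 'I_n * 'I_n -> 'I_(s'.+1)}) :
  good_triples phi <= ex_path n s'.+3.
Proof.
set G := @h3 n @: goodset phi.
have cardG : #|G| = good_triples phi.
  rewrite /G card_in_imset // => [[[a b] c]] [[x y] z]; rewrite !inE /= /h3 /=.
  case/and3P => ab bc _; case/and3P => xy yz _ E.
  by case: (set3_uniq ab bc xy yz E) => -> -> ->.
rewrite -cardG /ex_path; apply: (@leq_bigmax_cond _ (fun G : {set {set 'I_n}} => uniform3 G && ~~ contains_tight_path s'.+3 G) (fun G => #|G|) G).
apply/andP; split.
  apply/forallP => e; apply/implyP => /imsetP [[[a b] c]]; rewrite inE /= => /and3P [ab bc _] ->.
  by rewrite /h3 /= card_set3.
apply/negP => /existsP [f /andP [inc edg]].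
pose F i := f (inord i).
have step : forall i, i <= s' -> phi (F i, F i.+1) < phi (F i.+1, F i.+2).
  move=> i hi.
  have I0 : nat_of_ord (inord i : 'I_s'.+3) = i by rewrite inordK //; lia.
  have I1 : nat_of_ord (inord i.+1 : 'I_s'.+3) = i.+1 by rewrite inordK //; lia.
  have I2 : nat_of_ord (inord i.+2 : 'I_s'.+3) = i.+2 by rewrite inordK //; lia.
  move/forallP: edg => /(_ (inord i)) /forallP /(_ (inord i.+1)) /forallP /(_ (inord i.+2)) /implyP.
  rewrite /= I0 I1 I2 !eqxx => /(_ isT) /imsetP [[[a b] c]]; rewrite inE /= => /and3P [ab bc lab] E.
  have i01 : F i < F i.+1.
    by move/forallP: inc => /(_ (inord i)) /forallP /(_ (inord i.+1)) /implyP; rewrite I0 I1; apply.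
  have i12 : F i.+1 < F i.+2.
    by move/forallP: inc => /(_ (inord i.+1)) /forallP /(_ (inord i.+2)) /implyP; rewrite I1 I2; apply.
  by case: (set3_uniq i01 i12 ab bc E) => -> -> ->.
have grow : forall i, i <= s'.+1 -> i <= phi (F i, F i.+1).
  elim=> [//|i IH] hi.
  have := step i; have := IH (ltnW hi); lia.
have := grow s'.+1 (leqnn _).
have := ltn_ord (phi (F s'.+1, F s'.+2)); lia.
Qed.

Fixpoint Lf n (G : {set {set 'I_n}}) (k : nat) (u v : 'I_n) : nat :=
  if k is k'.+1 then
    \max_(w : 'I_n | (w < u) && ([set w; u; v] \in G)) (Lf G k' w u).+1
  else 0.

Lemma Lf_stab1 n (G : {set {set 'I_n}}) k (u v : 'I_n) :
  u < k -> Lf G k u v = Lf G k.+1 u v.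
Proof.
elim: k u v => [//|k IH] u v hu /=.
apply: eq_bigr => w /andP [wu _]; rewrite IH //; lia.
Qed.

Lemma Lf_stab n (G : {set {set 'I_n}}) k k' (u v : 'I_n) :
  u < k -> k <= k' -> Lf G k u v = Lf G k' u v.
Proof.
move=> hu /subnK <-; elim: (k' - k) => [//| d IH].
by rewrite addSn -Lf_stab1 //; lia.
Qed.

Lemma Lf_edge n (G : {set {set 'I_n}}) (u v w : 'I_n) :
  u < v -> [set u; v; w] \in G -> (Lf G n u v).+1 <= Lf G n v w.
Proof.
move=> uv e.
rewrite -(@Lf_stab _ G (v : nat).+1 n v w) //.
rewrite -(@Lf_stab _ G (v : nat) n u v) //; last by apply: ltnW.
rewrite /=.
by apply: (@leq_bigmax_cond _ (fun x : 'I_n => (x < v) && ([set x; v; w] \in G)) (fun x => (Lf G v x v).+1) u); rewrite uv e.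
Qed.

Lemma Lf_path n (G : {set {set 'I_n}}) k m (u v : 'I_n) :
  u < v -> m <= Lf G k u v ->
  exists g : nat -> 'I_n, [/\ (forall i, i <= m -> g i < g i.+1), g m = u, g m.+1 = v &
     (forall i, i < m -> [set g i; g i.+1; g i.+2] \in G)].
Proof.
have base : forall u v : 'I_n, u < v -> exists g : nat -> 'I_n,
   [/\ (forall i, i <= 0 -> g i < g i.+1), g 0 = u, g 1 = v &
     (forall i, i < 0 -> [set g i; g i.+1; g i.+2] \in G)].
  move=> u0 v0 uv0; exists (fun i => if i == 0 then u0 else v0); split => //.
  by move=> i; rewrite leqn0 => /eqP ->.
elim: k m u v => [|k IH] m u v uv.
  by rewrite /= leqn0 => /eqP ->; apply: base.
case: m => [_|m]; first by apply: base.
move=> hm.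
have [w /andP [/andP [wu we] hw]] : exists w : 'I_n, ((w < u) && ([set w; u; v] \in G)) && (m < (Lf G k w u).+1).
  apply/existsP; rewrite -[X in is_true X]negbK; apply/negP => /existsPn H.
  move: hm; rewrite /=; apply/negP; rewrite -ltnNge ltnS.
  apply/bigmax_leqP => x Px; move: (H x); rewrite Px /= -leqNgt; done.
rewrite ltnS in hw.
have [g [gi gm gm1 ge]] := IH m w u wu hw.
exists (fun i => if i <= m.+1 then g i else v); split.
- move=> i hi; case: (ltngtP i m.+1) => h.
  + by apply: gi; lia.
  + lia.
  + by rewrite h gm1.
- by rewrite ltnSn gm1.
- by rewrite ltnn.
- move=> i hi; case: (ltngtP i m) => h.
  + have -> : i <= m.+1 by lia.
    have -> : i < m.+1 by lia.
    have -> : i.+1 < m.+1 by lia.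
    by apply: ge.
  + lia.
  + by rewrite h ltnW // ltnSn ltnn gm gm1.
Qed.

Lemma chain n (g : nat -> 'I_n) N : (forall i, i <= N -> g i < g i.+1) ->
  forall i j, i < j -> j <= N.+1 -> g i < g j.
Proof.
move=> st i; elim=> [//|j IH] ij hj.
have := st j; rewrite -ltnS => /(_ hj) hs.
case: (ltngtP i j) => h.
- by apply: ltn_trans hs; apply: IH => //; lia.
- lia.
- by rewrite h.
Qed.

Lemma dir2 s' n (G : {set {set 'I_n}}) : uniform3 G -> ~~ contains_tight_path s'.+3 G ->
  #|G| <= f_lab n s'.+1.
Proof.
move=> uG nP.
have bound : forall u v : 'I_n, u < v -> Lf G n u v <= s'.
  move=> u v uv; rewrite leqNgt; apply/negP => hlt.
  have [g [gi gm gm1 ge]] := Lf_path uv hlt.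
  move/negP: nP; apply; apply/existsP; exists [ffun i : 'I_s'.+3 => g (val i)].
  apply/andP; split.
    apply/forallP => i; apply/forallP => j; apply/implyP => ij; rewrite !ffunE.
    apply: (chain gi ij); have := ltn_ord j; lia.
  apply/forallP => i; apply/forallP => j; apply/forallP => k; apply/implyP.
  case/andP => /eqP hj /eqP hk; rewrite !ffunE hj hk; apply: ge.
  have hk' : (k : nat) = (i : nat).+2 := hk.
  suff : (i : nat) < s'.+1 by [].
  by have := ltn_ord k; lia.
pose phi : {ffun 'I_n * 'I_n -> 'I_s'.+1} := [ffun p => inord (Lf G n p.1 p.2)].
apply: (@leq_trans (good_triples phi)); last first.
  exact: (@leq_bigmax _ (fun phi : {ffun 'I_n * 'I_n -> 'I_s'.+1} => good_triples phi) phi).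
have -> : good_triples phi = #|goodset phi| by [].
apply: leq_trans (leq_imset_card (@h3 n) _).
apply: subset_leq_card; apply/subsetP => e eG.
have /eqP he : #|e| == 3 by move/forallP: uG => /(_ e) /implyP; apply.
have [a [b [c [ab bc Ee]]]] := set3_sorted he.
apply/imsetP; exists (a, b, c); last by rewrite /h3 Ee.
rewrite inE /= ab bc /= !ffunE /= !inordK; last 2 first.
- by rewrite ltnS; apply: bound.
- by rewrite ltnS; apply: bound.
by apply: Lf_edge; rewrite // -Ee.
Qed.

Theorem proposition4p1 (s n : nat) : 3 <= s -> ex_path n s = f_lab n (s - 2).
Proof.
case: s => [|[|[|s']]] // _.
have -> : s'.+3 - 2 = s'.+1 by lia.
apply/eqP; rewrite eqn_leq; apply/andP; split.
  apply/bigmax_leqP => G /andP [uG nP]; exact: dir2.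
apply/bigmax_leqP => phi _; exact: dir1.
Qed.
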